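(* Let $\Phi\colon\mathcal{X}\to\mathcal{X}$ be an involution, $\Pi$ a closed convex family of conditional distributions $\pi\colon\mathcal{X}\to\Delta(\mathcal{Y})$, $F$ a Legendre function, and $\pi^*\in\mathcal{C}_{\mathrm{coh}}\cap\Pi$. Let $\overline\pi\in\arg\min_{\pi\in\mathcal{C}^\dagger_{\mathrm{coh}}}\mathsf{B}(\pi\parallel\pi_0)$ and $\widehat{\widehat\pi}\in\arg\min_{\pi\in\mathcal{C}_{\mathrm{coh}}\cap\Pi}\mathsf{B}(\pi\parallel\overline\pi)$. Then, with $\mathbb{E}=\mathbb{E}_{x\sim\mathcal{D}_{\mathcal{X}}}$, $$\mathbb{E}[\mathsf{B}_F(\pi^*(x)\parallel\widehat{\widehat\pi}(x))]\le\mathbb{E}[\mathsf{B}_F(\pi^*(x)\parallel\pi_0(x))]-\Big(\mathbb{E}[\mathsf{B}_F(\widehat{\widehat\pi}(x)\parallel\overline\pi(x))]+\mathbb{E}[\mathsf{B}_F(\overline\pi(x)\parallel\pi_0(x))]\Big).$$ Furthermore, $$\mathbb{E}[\mathsf{B}_F(\pi^*(x)\parallel\widehat{\widehat\pi}(x))]\le\mathbb{E}[\mathsf{B}_F(\pi^*(x)\parallel\pi_0(x))]-\Big(\mathbb{E}[\mathsf{B}_F(\widehat{\widehat\pi}(x)\parallel\overline\pi(x))]+\delta\Big),$$ where $\delta=\mathbb{E}\big[\lambda(x)F^*(u_0)+(1-\lambda(x))F^*(u_1)-F^*(\lambda(x)u_0+(1-\lambda(x))u_1)\big]\ge0$, with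 $\lambda(x)=\frac{\mathbb{P}(x)}{\mathbb{P}(x)+\mathbb{P}(\Phi(x))}$, $u_0=\nabla F(\pi_0(x))$, $u_1=\nabla F(\pi_0(\Phi(x)))$.
   Context: $\mathcal{X},\mathcal{Y}$ finite, $d=|\mathcal{Y}|$; $\Pi_{\mathrm{all}}=\Delta(\mathcal{Y})^{\mathcal{X}}$; $\pi_0\in\Pi_{\mathrm{all}}$ baseline; $\mathcal{D}_{\mathcal{X}}$ full-support distribution on $\mathcal{X}$, $\mathbb{P}(x)=\mathcal{D}_{\mathcal{X}}(x)$. $F$ has a closed convex domain $\mathcal{K}\supseteq\mathbb{R}^d_{\ge0}$ with $\mathrm{int}(\mathcal{K})\supseteq\mathbb{R}^d_{++}$; $F^*$ is its Fenchel conjugate; $\mathsf{B}_F(p\parallel q)=F(p)-F(q)-\langle\nabla F(q),p-q\rangle$ and $\mathsf{B}(\pi\parallel\pi')=\mathbb{E}[\mathsf{B}_F(\pi(x)\parallel\pi'(x))]$. $\Pi^\dagger_{\mathrm{all}}=(\mathbb{R}^d_+)^{\mathcal{X}}$; $\mathcal{C}^{\dagger}_{\mathrm{coh}}=\{\pi\in\Pi^\dagger_{\mathrm{all}}:\pi(x)=\pi(\Phi(x))\ \forall x\}$; $\mathcal{C}_{\mathrm{coh}}=\mathcal{C}^\dagger_{\mathrm{coh}}\cap\Pi_{\mathrm{all}}$. A Legendre function is proper, closed, convex, differentiable on the interior $\Omega$ of its domain, with $\nabla F\colon\Omega\to\mathrm{int}(\mathrm{dom}F^* )$ a bijection. *)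

(* Defs.v *)
From HB Require Import structures.
From mathcomp Require Import all_boot all_order all_algebra.
From mathcomp Require Import all_classical all_reals all_analysis.
Set Implicit Arguments. Unset Strict Implicit. Unset Printing Implicit Defensive.
Import Order.TTheory GRing.Theory Num.Theory.
Import numFieldNormedType.Exports.
Local Open Scope classical_set_scope.
Local Open Scope ring_scope.

Section Defs.
Variables (R : realType) (Y : finType).

(* vectors of R^d, d = |Y|, are functions Y -> R *)
Definition dotp (u p : Y -> R) : R := \sum_(y : Y) u y * p y.

Definition nonneg (p : Y -> R) : Prop := forall y, 0 <= p y.
Definition strictpos (p : Y -> R) : Prop := forall y, 0 < p y.
Definition in_simplex (p : Y -> R) : Prop := nonneg p /\ \sum_(y : Y) p y = 1.

(* interior of a set of R^d (all norms on R^d are equivalent; sup norm) *)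
Definition interior_of (A : set (Y -> R)) (q : Y -> R) : Prop :=
  exists2 e : R, 0 < e & forall p, (forall y, `|p y - q y| < e) -> A p.

Definition closed_vset (A : set (Y -> R)) : Prop :=
  forall (u : nat -> Y -> R) (q : Y -> R), (forall n, A (u n)) ->
    (forall y, (fun n => u n y) @ \oo --> q y) -> A q.

Definition convex_vset (A : set (Y -> R)) : Prop :=
  forall p q (t : R), A p -> A q -> 0 <= t <= 1 ->
    A (fun y => t * p y + (1 - t) * q y).

(* F : R^d -> R with domain K (F = +oo outside K) *)
Definition convex_on (K : set (Y -> R)) (F : (Y -> R) -> R) : Prop :=
  forall p q (t : R), K p -> K q -> 0 <= t <= 1 ->
    F (fun y => t * p y + (1 - t) * q y) <= t * F p + (1 - t) * F q.

Definition closed_fun (K : set (Y -> R)) (F : (Y -> R) -> R) : Prop :=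
  forall (u : nat -> Y -> R) (s : nat -> R) (q : Y -> R) (t : R),
    (forall n, K (u n) /\ F (u n) <= s n) ->
    (forall y, (fun n => u n y) @ \oo --> q y) -> s @ \oo --> t ->
    K q /\ F q <= t.

Definition has_gradient (F : (Y -> R) -> R) (q g : Y -> R) : Prop :=
  forall e : R, 0 < e -> exists2 eta : R, 0 < eta & forall h : Y -> R,
    (forall y, `|h y| < eta) ->
    `|F (fun y => q y + h y) - F q - dotp g h| <= e * \sum_(y : Y) `|h y|.

Definition fconj (K : set (Y -> R)) (F : (Y -> R) -> R) (u : Y -> R) : \bar R :=
  ereal_sup [set ((dotp u p - F p)%:E) | p in K].

Definition dom_fconj (K : set (Y -> R)) (F : (Y -> R) -> R) : set (Y -> R) :=
  [set u | (fconj K F u < +oo)%E].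

Definition legendre (K : set (Y -> R)) (F : (Y -> R) -> R)
    (gradF : (Y -> R) -> (Y -> R)) : Prop :=
  [/\ (exists p, K p) /\
      closed_fun K F,
      convex_vset K /\ convex_on K F,
      (forall q, interior_of K q -> has_gradient F q (gradF q)) /\
      (forall q, interior_of K q -> interior_of (dom_fconj K F) (gradF q)),
      (forall q1 q2, interior_of K q1 -> interior_of K q2 ->
          gradF q1 = gradF q2 -> q1 = q2)
    & (forall u, interior_of (dom_fconj K F) u ->
          exists2 q, interior_of K q & gradF q = u)].

Definition bregF (F : (Y -> R) -> R) (gradF : (Y -> R) -> (Y -> R))
    (p q : Y -> R) : R :=
  F p - F q - dotp (gradF q) (fun y => p y - q y).

Variable X : finType.

Definition expect (P : X -> R) (f : X -> R) : R := \sum_(x : X) P x * f x.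

Definition bregP (P : X -> R) (F : (Y -> R) -> R) (gradF : (Y -> R) -> (Y -> R))
    (pi pi' : X -> Y -> R) : R :=
  expect P (fun x => bregF F gradF (pi x) (pi' x)).

Definition Pi_all : set (X -> Y -> R) := [set pi | forall x, in_simplex (pi x)].
Definition Pi_dag_all : set (X -> Y -> R) := [set pi | forall x, nonneg (pi x)].

Definition C_coh_dag (Phi : X -> X) : set (X -> Y -> R) :=
  [set pi | Pi_dag_all pi /\ forall x, pi x = pi (Phi x)].
Definition C_coh (Phi : X -> X) : set (X -> Y -> R) := C_coh_dag Phi `&` Pi_all.

Definition closed_family (Pi : set (X -> Y -> R)) : Prop :=
  forall (u : nat -> X -> Y -> R) (pi : X -> Y -> R), (forall n, Pi (u n)) ->
    (forall x y, (fun n => u n x y) @ \oo --> pi x y) -> Pi pi.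

Definition convex_family (Pi : set (X -> Y -> R)) : Prop :=
  forall pi pi' (t : R), Pi pi -> Pi pi' -> 0 <= t <= 1 ->
    Pi (fun x y => t * pi x y + (1 - t) * pi' x y).

End Defs.

Definition is_argmin (T : Type) (R : realType) (S : set T) (f : T -> R) (t : T) : Prop :=
  S t /\ forall s, S s -> f t <= f s.

(* Main.v *)
Require Import Defs.
From HB Require Import structures.
From mathcomp Require Import all_boot all_order all_algebra.
From mathcomp Require Import all_classical all_reals all_analysis.
From mathcomp Require Import ring lra.
Import Order.TTheory GRing.Theory Num.Theory.
Import numFieldNormedType.Exports.
Local Open Scope classical_set_scope.
Local Open Scope ring_scope.

Section H.
Variables (R : realType) (Y : finType).

Lemma dotpB (u a b : Y -> R) :
  dotp u (fun y => a y - b y) = dotp u a - dotp u b.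
Proof. by rewrite /dotp -sumrB; apply: eq_bigr => y _; rewrite mulrBr. Qed.

Lemma dotpZ (u h : Y -> R) (t : R) :
  dotp u (fun y => t * h y) = t * dotp u h.
Proof. by rewrite /dotp mulr_sumr; apply: eq_bigr => y _; ring. Qed.

Lemma dotpL (u v p : Y -> R) (a b : R) :
  dotp (fun y => a * u y + b * v y) p = a * dotp u p + b * dotp v p.
Proof.
by rewrite /dotp !mulr_sumr -big_split; apply: eq_bigr => y _ /=; ring.
Qed.

Lemma ge_eps (a b S : R) : 0 <= S ->
  (forall e, 0 < e -> a <= b + e * S) -> a <= b.
Proof.
move=> S0 H; rewrite leNgt; apply/negP => ab.
set e := (a - b) / (S + 1).
have e0 : 0 < e by apply: divr_gt0; lra.
have he : e * (S + 1) = a - b by rewrite /e; field; rewrite gt_eqF //; lra.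
have := H e e0; nra.
Qed.

Lemma sum_norm_le (h : Y -> R) y : `|h y| <= \sum_(z : Y) `|h z|.
Proof.
rewrite (bigD1 y) //= lerDl; apply: sumr_ge0 => z _; exact: normr_ge0.
Qed.

Lemma sum_normZ (h : Y -> R) (t : R) : 0 <= t ->
  \sum_(y : Y) `|t * h y| = t * \sum_(y : Y) `|h y|.
Proof.
move=> t0; rewrite mulr_sumr; apply: eq_bigr => y _.
by rewrite normrM ger0_norm.
Qed.

Lemma grad_ineq (K : set (Y -> R)) (F : (Y -> R) -> R) (g q p : Y -> R) :
  convex_on K F -> K q -> has_gradient F q g -> K p ->
  F q + dotp g (fun y => p y - q y) <= F p.
Proof.
move=> cvx Kq hg Kp.
set h := fun y => p y - q y.
set S := \sum_(y : Y) `|h y|.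
have S0 : 0 <= S by apply: sumr_ge0 => y _; exact: normr_ge0.
suff H : dotp g h <= F p - F q by lra.
apply: (@ge_eps _ _ _ S0) => e e0.
have [eta eta0 Heta] := hg e e0.
set t := eta / (eta + S).
have t0 : 0 < t by apply: divr_gt0 => //; lra.
have ht : t * (eta + S) = eta by rewrite /t; field; rewrite gt_eqF //; lra.
have t1 : t <= 1 by nra.
have tS : t * S < eta by nra.
have := Heta (fun y => t * h y).
rewrite sum_normZ ?(ltW t0) // dotpZ.
have -> : (fun y => q y + t * h y) = (fun y => t * p y + (1 - t) * q y).
  by apply: funext => y; rewrite /h; ring.
move=> H1.
have hb : forall y, `|t * h y| < eta.
  move=> y; rewrite normrM ger0_norm ?(ltW t0) //.
  apply: le_lt_trans tS; apply: ler_wpM2l; [exact: ltW | exact: sum_norm_le].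
have {H1} := H1 hb.
have := cvx p q t Kp Kq.
rewrite (ltW t0) t1 => /(_ isT).
rewrite ler_norml => H2 /andP[H3 _].
have : t * (dotp g h - (F p - F q) - e * S) <= 0.
  rewrite !mulrBr; move: H2 H3; set A := F _; set D := dotp g h; rewrite -/S; lra.
rewrite pmulr_rle0 //; lra.
Qed.

Variable X : finType.

Lemma bregF_diff (F : (Y -> R) -> R) gradF (a b c : Y -> R) :
  bregF F gradF a c - bregF F gradF b c =
  F a - F b - dotp (gradF c) (fun y => a y - b y).
Proof. rewrite /bregF !dotpB; ring. Qed.

Lemma first_order (P : X -> R) F gradF (C : set (X -> Y -> R))
    (q pb pi : X -> Y -> R) :
  (forall x, 0 <= P x) ->
  (forall x, has_gradient F (pb x) (gradF (pb x))) ->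
  is_argmin C (fun s => bregP P F gradF s q) pb ->
  (forall t, 0 < t <= 1 -> C (fun x y => t * pi x y + (1 - t) * pb x y)) ->
  0 <= \sum_(x : X) P x * (dotp (gradF (pb x)) (fun y => pi x y - pb x y)
                         - dotp (gradF (q x)) (fun y => pi x y - pb x y)).
Proof.
move=> P0 hg [Cpb pbmin] Cconv.
set h := fun x y => pi x y - pb x y.
set D := \sum_(x : X) _.
set S := fun x => \sum_(y : Y) `|h x y|.
have S0 : forall x, 0 <= S x by move=> x; apply: sumr_ge0 => y _; exact: normr_ge0.
set W := \sum_(x : X) P x * S x.
have W0 : 0 <= W by apply: sumr_ge0 => x _; apply: mulr_ge0.
apply: (@ge_eps _ _ _ W0) => e e0.
have : forall x, exists eta : R, 0 < eta /\ forall h : Y -> R,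
    (forall y, `|h y| < eta) ->
    `|F (fun y => pb x y + h y) - F (pb x) - dotp (gradF (pb x)) h|
       <= e * \sum_(y : Y) `|h y|.
  by move=> x; have [eta eta0 H] := hg x e e0; exists eta.
case/choice => eta Heta.
have eta0 : forall x, 0 < eta x by move=> x; case: (Heta x).
set T := \sum_(x : X) S x / eta x.
have T0 : 0 <= T by apply: sumr_ge0 => x _; apply: divr_ge0 => //; exact: ltW.
set t := (1 + T)^-1.
have t0 : 0 < t by rewrite invr_gt0; lra.
have ht : t * (1 + T) = 1 by rewrite mulrC mulfV // gt_eqF //; lra.
have t1 : t <= 1 by nra.
have hb : forall x y, `|t * h x y| < eta x.
  move=> x y; rewrite normrM ger0_norm ?(ltW t0) //.
  have k1 : S x / eta x <= T.
    rewrite /T (bigD1 x) //= lerDl; apply: sumr_ge0 => z _.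
    by apply: divr_ge0 => //; exact: ltW.
  have k2 : S x = S x / eta x * eta x by rewrite divfK // gt_eqF.
  have k3 : `|h x y| <= S x by exact: sum_norm_le.
  have k4 : t * `|h x y| <= t * (S x / eta x) * eta x.
    by rewrite -mulrA -k2; apply: ler_wpM2l => //; exact: ltW.
  have k5 : t * (S x / eta x) <= t * T by apply: ler_wpM2l => //; exact: ltW.
  have k6 : t * T < 1 by nra.
  have k7 : t * (S x / eta x) < 1 by exact: le_lt_trans k5 k6.
  apply: (le_lt_trans k4).
  by rewrite gtr_pMl.
have := pbmin _ (Cconv t _); rewrite t0 t1 => /(_ isT).
rewrite -subr_ge0 /bregP /expect -sumrB.
under eq_bigr => x _ do rewrite -mulrBr bregF_diff.
move=> Hge.
have : 0 <= t * (D + e * W).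
  apply: (le_trans Hge).
  have -> : t * (D + e * W) =
      \sum_(x : X) P x * (t * (dotp (gradF (pb x)) (h x) - dotp (gradF (q x)) (h x))
                          + e * (t * S x)).
    rewrite mulrDr /D /W !mulr_sumr -big_split; apply: eq_bigr => x _ /=; ring.
  apply: ler_sum => x _; apply: ler_wpM2l => //.
  have [_ Hx] := Heta x.
  have := Hx (fun y => t * h x y) (hb x).
  rewrite sum_normZ ?(ltW t0) // dotpZ.
  have -> : (fun y => pb x y + t * h x y) = (fun y => t * pi x y + (1 - t) * pb x y).
    by apply: funext => y; rewrite /h; ring.
  have -> : (fun y => t * pi x y + (1 - t) * pb x y - pb x y) = (fun y => t * h x y).
    by apply: funext => y; rewrite /h; ring.
  rewrite dotpZ ler_norml => /andP[_ H].
  rewrite -/(S x) in H *; lra.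
by rewrite pmulr_rge0.
Qed.

Lemma three_point (P : X -> R) F gradF (p qb q0 : X -> Y -> R) :
  bregP P F gradF p q0 = bregP P F gradF p qb + bregP P F gradF qb q0 +
  \sum_(x : X) P x * (dotp (gradF (qb x)) (fun y => p x y - qb x y)
                    - dotp (gradF (q0 x)) (fun y => p x y - qb x y)).
Proof.
rewrite /bregP /expect -!big_split /=; apply: eq_bigr => x _.
rewrite /bregF !dotpB; ring.
Qed.
End H.

Theorem theorem14 (R : realType) (X Y : finType) (P : X -> R) (Phi : X -> X)
  (Pi : set (X -> Y -> R)) (K : set (Y -> R)) (F : (Y -> R) -> R)
  (gradF : (Y -> R) -> (Y -> R)) (pi0 pistar pibar pihh : X -> Y -> R) :
  (forall x, 0 < P x) -> \sum_(x : X) P x = 1 ->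
  involutive Phi ->
  Pi `<=` @Pi_all R Y X -> closed_family Pi -> convex_family Pi ->
  closed_vset K -> convex_vset K ->
  (forall p, nonneg p -> K p) -> (forall p, strictpos p -> interior_of K p) ->
  legendre K F gradF ->
  @Pi_all R Y X pi0 -> (forall x, interior_of K (pi0 x)) ->
  C_coh Phi pistar -> Pi pistar ->
  is_argmin (C_coh_dag Phi) (fun pi => bregP P F gradF pi pi0) pibar ->
  is_argmin (C_coh Phi `&` Pi) (fun pi => bregP P F gradF pi pibar) pihh ->
  (forall x, interior_of K (pibar x)) -> (forall x, interior_of K (pihh x)) ->
  let lam := fun x => P x / (P x + P (Phi x)) in
  let u0 := fun x => gradF (pi0 x) in
  let u1 := fun x => gradF (pi0 (Phi x)) in
  let delta := expect P (fun x =>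
      lam x * fine (fconj K F (u0 x)) + (1 - lam x) * fine (fconj K F (u1 x))
      - fine (fconj K F (fun y => lam x * u0 x y + (1 - lam x) * u1 x y))) in
  [/\ bregP P F gradF pistar pihh <=
        bregP P F gradF pistar pi0
        - (bregP P F gradF pihh pibar + bregP P F gradF pibar pi0),
      bregP P F gradF pistar pihh <=
        bregP P F gradF pistar pi0 - (bregP P F gradF pihh pibar + delta)
    & 0 <= delta].
Proof.
move=> Ppos P1 hPhi PiS _ Piconv _ _ _ _ [_ [_ cvxF] [hgrad _] _ _] pi0S pi0I
  [[pstn pstc] pstS] pstPi [[pbn pbc] pbmin] [[[[phn phc] phS] phPi] phmin]
  pbI phI lam u0 u1 delta.
have P0 : forall x, 0 <= P x by move=> x; exact: ltW.
have intK : forall q, interior_of K q -> K q.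
  by move=> q [e e0 H]; apply: H => y; rewrite subrr normr0.
have H1 := @first_order R Y X P F gradF (C_coh_dag Phi) pi0 pibar pistar P0
  (fun x => hgrad _ (pbI x)) (conj (conj pbn pbc) pbmin).
have H2 := @first_order R Y X P F gradF (C_coh Phi `&` Pi) pibar pihh pistar P0
  (fun x => hgrad _ (phI x)) (conj (conj (conj (conj phn phc) phS) phPi) phmin).
have {H1} H1 : 0 <= \sum_(x : X) P x *
    (dotp (gradF (pibar x)) (fun y => pistar x y - pibar x y)
     - dotp (gradF (pi0 x)) (fun y => pistar x y - pibar x y)).
  apply: H1 => t /andP[t0 t1]; split.
    by move=> x y; apply: addr_ge0; apply: mulr_ge0 => //; [exact: ltW|exact: pstn|lra|exact: pbn].
  by move=> x; apply: funext => y; rewrite (pstc x) (pbc x).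
have {H2} H2 : 0 <= \sum_(x : X) P x *
    (dotp (gradF (pihh x)) (fun y => pistar x y - pihh x y)
     - dotp (gradF (pibar x)) (fun y => pistar x y - pihh x y)).
  apply: H2 => t /andP[t0 t1]; split; [split; [split|]|].
  - by move=> x y; apply: addr_ge0; apply: mulr_ge0 => //; [exact: ltW|exact: pstn|lra|exact: phn].
  - by move=> x; apply: funext => y; rewrite (pstc x) (phc x).
  - move=> x; split.
      by move=> y; apply: addr_ge0; apply: mulr_ge0 => //; [exact: ltW|exact: pstn|lra|exact: phn].
    rewrite big_split /= -!mulr_sumr (proj2 (pstS x)) (proj2 (phS x)); ring.
  - by apply: Piconv => //; rewrite (ltW t0) t1.
have E1 := @three_point R Y X P F gradF pistar pibar pi0.
have E2 := @three_point R Y X P F gradF pistar pihh pibar.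
set A := fun x => dotp (u0 x) (pi0 x) - F (pi0 x).
have gi : forall x p, K p -> dotp (u0 x) p - F p <= A x.
  move=> x p Kp; have := @grad_ineq R Y K F _ _ _ cvxF (intK _ (pi0I x)) (hgrad _ (pi0I x)) Kp.
  rewrite dotpB /A /u0; lra.
have fA : forall x, fconj K F (u0 x) = (A x)%:E.
  move=> x; apply/eqP; rewrite eq_le; apply/andP; split.
    by apply: ub_ereal_sup => _ [p Kp <-]; rewrite lee_fin; exact: gi.
  by apply: ereal_sup_ubound; exists (pi0 x) => //; exact: intK.
have lamE : forall x, 1 - lam x = lam (Phi x).
  move=> x; rewrite /lam hPhi; field.
  by rewrite gt_eqF // addr_gt0.
have lam0 : forall x, 0 <= lam x by move=> x; apply: divr_ge0 => //; apply: addr_ge0.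
have lam1 : forall x, lam x <= 1.
  by move=> x; have := lam0 (Phi x); rewrite -lamE; lra.
set w := fun x y => lam x * u0 x y + (1 - lam x) * u1 x y.
set C := fun x => fine (fconj K F (w x)).
have fW : forall x, dotp (w x) (pibar x) - F (pibar x) <= C x
                    /\ C x <= lam x * A x + (1 - lam x) * A (Phi x).
  move=> x.
  have ub : (fconj K F (w x) <= (lam x * A x + (1 - lam x) * A (Phi x))%:E)%E.
    apply: ub_ereal_sup => _ [p Kp <-]; rewrite lee_fin /w dotpL.
    have := gi x p Kp; have := gi (Phi x) p Kp.
    have := lam0 x; have := lam1 x; rewrite /u1 -/(u0 (Phi x)); nra.
  have lb : ((dotp (w x) (pibar x) - F (pibar x))%:E <= fconj K F (w x))%E.
    by apply: ereal_sup_ubound; exists (pibar x) => //; exact: intK.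
  rewrite /C; move: lb ub; case: (fconj K F (w x)) => [r| |] /=.
  - by rewrite !lee_fin => ? ?; split.
  - move=> _; rewrite leye_eq; done.
  - move=> H; exfalso; move: H; rewrite leeNy_eq; done.

have reidx : forall a : X -> R,
    \sum_(x : X) P x * (lam x * a x + (1 - lam x) * a (Phi x)) = \sum_(x : X) P x * a x.
  move=> a.
  rewrite (eq_bigr (fun x => P x * lam x * a x + P x * (1 - lam x) * a (Phi x)));
    last by move=> x _; ring.
  rewrite big_split /= [X in _ + X = _](reindex_inj (inv_inj hPhi)) /= -big_split /=.
  apply: eq_bigr => x _; rewrite hPhi lamE hPhi /lam; field.
  by rewrite gt_eqF // addr_gt0.
have Dd : delta = \sum_(x : X) P x * A x - \sum_(x : X) P x * C x.
  rewrite /delta /expect -(reidx A) -sumrB; apply: eq_bigr => x _.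
  rewrite fA /u1 -/(u0 (Phi x)) fA /=; rewrite /C /w /u1; ring.
have d0 : 0 <= delta.
  rewrite /delta /expect; apply: sumr_ge0 => x _; apply: mulr_ge0 => //.
  rewrite fA /u1 -/(u0 (Phi x)) fA /=.
  have [_ h] := fW x; move: h; rewrite /C /w /u1; lra.
have G2 : \sum_(x : X) P x * (dotp (w x) (pibar x) - F (pibar x))
          <= \sum_(x : X) P x * C x.
  by apply: ler_sum => x _; apply: ler_wpM2l => //; case: (fW x).
have G3 : \sum_(x : X) P x * (dotp (w x) (pibar x) - F (pibar x)) =
   \sum_(x : X) P x * dotp (u0 x) (pibar x) - \sum_(x : X) P x * F (pibar x).
  rewrite -(reidx (fun x => dotp (u0 x) (pibar x))) -sumrB.
  apply: eq_bigr => x _; rewrite /w dotpL /u1 -/(u0 (Phi x)) -(pbc x); ring.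
have G4 : bregP P F gradF pibar pi0 = \sum_(x : X) P x * F (pibar x)
   + \sum_(x : X) P x * A x - \sum_(x : X) P x * dotp (u0 x) (pibar x).
  rewrite /bregP /expect -big_split -sumrB; apply: eq_bigr => x _ /=.
  rewrite /bregF dotpB /A /u0; ring.
have Dle : delta <= bregP P F gradF pibar pi0 by lra.
split => //; lra.
Qed.
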